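(* Let $k,\ell\ge0$, $\pi_1\in\mathcal{T}_k$, $\pi_2\in\mathcal{T}_\ell$, where $\mathcal{T}_0=\{\epsilon\}$. Let $\pi=C_1(\pi_1,\pi_2)=\pi_1\cdot(k+\ell+1)\cdot\pi_2^{+k}$. Then $\pi\in\mathcal{T}_{k+\ell+1}$, and $\operatorname{slmax}(\pi)=\operatorname{slmax}(\pi_1)+\operatorname{slmax}(\pi_2)+1$.
   Context: For a finite sequence $A$ of distinct integers, the stack-sorting operator $\mathcal{S}$ is defined by $\mathcal{S}(\epsilon)=\epsilon$ for the empty sequence and, if $A$ is non-empty with largest element $m$, writing $A=A_L\cdot(m)\cdot A_R$ (concatenation), $\mathcal{S}(A)=\mathcal{S}(A_L)\cdot\mathcal{S}(A_R)\cdot(m)$. For $n\ge1$, $\mathcal{T}_n$ is the set of permutations $\sigma\in\mathfrak{S}_n$ (viewed as sequences) with $\mathcal{S}(\mathcal{S}(\sigma))$ equal to the identity (two-stack sortable permutations). For a sequence $\tau$, $\tau^{+k}$ is obtained by adding $k$ to each element. For a permutation $\sigma$, $\operatorname{slmax}(\sigma)$ is the number of left-to-right maxima of $\mathcal{S}(\sigma)$ (indices $i$ such that $\mathcal{S}(\sigma)(i)>\mathcal{S}(\sigma)(j)$ for all $j<i$), with $\operatorname{slmax}(\epsilon)=0$. *)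

(* Defs.v *)
From mathcomp Require Import all_boot.
Set Implicit Arguments. Unset Strict Implicit. Unset Printing Implicit Defensive.

(* Sequences of distinct integers are modelled as seq nat (all values used are
   positive naturals, as permutations of [1..n] and their shifts). *)

Fixpoint stack_sort_fuel (fuel : nat) (A : seq nat) : seq nat :=
  match fuel with
  | 0 => [::]
  | f.+1 =>
    match A with
    | [::] => [::]
    | _ =>
      let m := foldr maxn 0 A in
      let i := index m A in
      stack_sort_fuel f (take i A) ++ stack_sort_fuel f (drop i.+1 A) ++ [:: m]
    end
  end.

Definition stack_sort (A : seq nat) : seq nat := stack_sort_fuel (size A) A.

Definition is_perm (n : nat) (s : seq nat) : bool := perm_eq s (iota 1 n).

Definition two_stack_sortable (n : nat) (s : seq nat) : bool :=
  is_perm n s && (stack_sort (stack_sort s) == iota 1 n).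

Definition shift (k : nat) (t : seq nat) : seq nat := map (fun x => x + k) t.

Definition lrmax (s : seq nat) : nat :=
  count (fun i => all (fun j => nth 0 s j < nth 0 s i) (iota 0 i)) (iota 0 (size s)).

Definition slmax (s : seq nat) : nat := lrmax (stack_sort s).

Definition C1 (k l : nat) (p1 p2 : seq nat) : seq nat :=
  p1 ++ (k + l + 1) :: shift k p2.

(* Main.v *)
Require Import Defs.
From mathcomp Require Import all_boot zify.

Notation S := stack_sort.
Notation fm s := (foldr maxn 0 s).

Lemma fm_mem x s : fm (x :: s) \in x :: s.
Proof.
elim: s x => [|y s IH] x; first by rewrite /= maxn0 mem_head.
have E : fm (x :: y :: s) = maxn x (fm (y :: s)) by [].
rewrite E; move: (IH y); move: (fm (y :: s)) => t ht.
rewrite in_cons; case: (leqP x t) => h.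
  by rewrite ht orbT.
by rewrite eqxx.
Qed.

Lemma fm_ge x s : x \in s -> x <= fm s.
Proof.
elim: s => [|y s IH] //=; rewrite in_cons => /orP [/eqP->|/IH h].
  by rewrite leq_maxl.
by rewrite (leq_trans h) // leq_maxr.
Qed.

Lemma fm_le m s : all (fun x => x <= m) s -> fm s <= m.
Proof. by elim: s => [|y s IH] //= /andP [h1 h2]; rewrite geq_max h1 IH. Qed.

Lemma idx_lt x s : index (fm (x :: s)) (x :: s) < size (x :: s).
Proof. by rewrite index_mem fm_mem. Qed.

Lemma ssf_eq f g A : size A <= f -> size A <= g ->
  stack_sort_fuel f A = stack_sort_fuel g A.
Proof.
elim: f g A => [|f IH] g [|x A] //=; first by case: g.
  by case: g.
case: g => [|g] //= hf hg.
have hi := idx_lt x A.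
set s := x :: A in hi *.
set i := index _ s in hi *.
rewrite (IH g (take i s)); last 2 first.
- by rewrite size_take hi /= -ltnS (leq_trans hi).
- by rewrite size_take hi /= -ltnS (leq_trans hi).
rewrite (IH g (drop i.+1 s)) // size_drop /s /=; lia.
Qed.

Lemma S_nil : S [::] = [::].
Proof. by []. Qed.

Lemma S_cons A : A != [::] ->
  S A = S (take (index (fm A) A) A) ++ S (drop (index (fm A) A).+1 A) ++ [:: fm A].
Proof.
case: A => [|x A] // _.
have hi := idx_lt x A.
rewrite /stack_sort /=.
set s := x :: A in hi *.
set i := index _ s in hi *.
rewrite (@ssf_eq (size A) (size (take i s))) ?(@ssf_eq (size A) (size (drop i.+1 s))) //.
- by rewrite size_drop /s /=; lia.
- by rewrite size_take hi /= -ltnS (leq_trans hi).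
Qed.

Lemma S_perm_n n A : size A <= n -> perm_eq (S A) A.
Proof.
elim: n A => [|n IH] [|x A] //= hs.
rewrite S_cons //.
have hi := idx_lt x A.
set s := x :: A in hi *.
set i := index _ s in hi *.
have hm : fm s \in s by apply: fm_mem.
have E : s = take i s ++ fm s :: drop i.+1 s.
  by rewrite -[in LHS](cat_take_drop i s) (drop_nth (fm s) hi) nth_index.
rewrite [X in perm_eq _ X]E.
apply: (@perm_trans _ (S (take i s) ++ [:: fm s] ++ S (drop i.+1 s))).
  by rewrite perm_cat2l perm_catC.
rewrite -cat1s.
have h1 : size (take i s) <= n by rewrite size_take hi -ltnS (leq_trans hi).
have h2 : size (drop i.+1 s) <= n by rewrite size_drop /s /=; lia.
by apply: perm_cat; [apply: IH | rewrite perm_cat2l; apply: IH].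
Qed.

Lemma S_perm A : perm_eq (S A) A.
Proof. exact: (@S_perm_n (size A)). Qed.

Lemma S_mem A x : (x \in S A) = (x \in A).
Proof. exact: (perm_mem (S_perm A)). Qed.

Lemma fm_split m L R : all (fun x => x < m) L -> all (fun x => x < m) R ->
  fm (L ++ m :: R) = m.
Proof.
move=> hL hR.
have hR' : fm R <= m.
  by apply: fm_le; apply: sub_all hR => x /ltnW.
rewrite foldr_cat /= (maxn_idPl hR').
by elim: L hL => [|y L IHL] //= /andP [hy /IHL ->]; apply/maxn_idPr/ltnW.
Qed.

Lemma S_split m L R : all (fun x => x < m) L -> all (fun x => x < m) R ->
  S (L ++ m :: R) = S L ++ S R ++ [:: m].
Proof.
move=> hL hR.
rewrite S_cons; last by case: L {hL}.
rewrite fm_split //.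
have hn : m \notin L by apply/negP => /(allP hL); rewrite ltnn.
rewrite index_cat (negbTE hn) /= eqxx addn0.
have -> : drop (size L).+1 (L ++ m :: R) = R.
  by clear hL hn; elim: L => [|y L IHL] /=; rewrite ?drop0.
by rewrite take_cat ltnn subnn take0 cats0.
Qed.

Lemma fm_catr A s : (forall a, a \in A -> a < fm s) -> fm (A ++ s) = fm s.
Proof.
  rewrite foldr_cat.
  elim: A => [|a A IHA] //= hA.
  rewrite IHA; last by move=> b hb; apply: hA; rewrite in_cons hb orbT.
  by apply/maxn_idPr/ltnW/hA; rewrite mem_head.
Qed.

Lemma take_addcat (A s : seq nat) j : take (size A + j) (A ++ s) = A ++ take j s.
Proof. by elim: A => //= a A ->. Qed.
Lemma drop_addcat (A s : seq nat) j : drop (size A + j) (A ++ s) = drop j s.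
Proof. by elim: A. Qed.

Lemma S_cat_n n A B : size B <= n -> (forall a b, a \in A -> b \in B -> a < b) ->
  S (A ++ B) = S A ++ S B.
Proof.
elim: n B => [|n IH] [|y B] //= hs hab; rewrite ?cats0 //.
set s := y :: B.
have hm : fm s \in s by apply: fm_mem.
have hi : index (fm s) s < size s by apply: idx_lt.
have hA : forall a, a \in A -> a < fm s by move=> a /hab; apply.
have hfm : fm (A ++ s) = fm s.
  by apply: fm_catr.
have hn : fm s \notin A by apply/negP => /hA; rewrite ltnn.
rewrite (S_cons (A ++ s)); last by rewrite -size_eq0 size_cat /s /= addnS.
rewrite (S_cons s) // hfm index_cat (negbTE hn) take_addcat -addnS drop_addcat.
set j := index _ s in hi *.
rewrite IH ?catA //.
- by rewrite size_take hi -ltnS (leq_trans hi).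
- by move=> a b ha /mem_take hb; apply: hab.
Qed.

Lemma S_cat A B : (forall a b, a \in A -> b \in B -> a < b) ->
  S (A ++ B) = S A ++ S B.
Proof. exact: (@S_cat_n (size B)). Qed.

Lemma fm_shift k x s : fm (shift k (x :: s)) = fm (x :: s) + k.
Proof.
elim: s x => [|y s IH] x; first by rewrite /= !maxn0.
have E : fm (shift k [:: x, y & s]) = maxn (x + k) (fm (shift k (y :: s))) by [].
by rewrite E IH -addn_maxl.
Qed.

Lemma S_shift_n k n A : size A <= n -> S (shift k A) = shift k (S A).
Proof.
elim: n A => [|n IH] [|x A] //= hs.
have hi := idx_lt x A.
rewrite (S_cons (shift k (x :: A))) // (S_cons (x :: A)) // fm_shift.
set s := x :: A in hi *.
have -> : index (fm s + k) (shift k s) = index (fm s) s.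
  by rewrite /shift (index_map (@addIn k)).
set i := index _ s in hi *.
rewrite /shift -map_take -map_drop !map_cat.
rewrite -/(shift k (take i s)) -/(shift k (drop i.+1 s)) !IH //.
- by rewrite size_drop /s /=; lia.
- by rewrite size_take hi -ltnS (leq_trans hi).
Qed.

Lemma S_shift k A : S (shift k A) = shift k (S A).
Proof. exact: (@S_shift_n k (size A)). Qed.

Lemma nth_addcat (A B : seq nat) j : nth 0 (A ++ B) (size A + j) = nth 0 B j.
Proof. by elim: A. Qed.

Lemma lrmax_cat A B : (forall a b, a \in A -> b \in B -> a < b) ->
  lrmax (A ++ B) = lrmax A + lrmax B.
Proof.
move=> hab; rewrite /lrmax size_cat iotaD count_cat; congr (_ + _).
  apply: eq_in_count => i; rewrite mem_iota add0n => /andP [_ hi].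
  apply: eq_in_all => j; rewrite mem_iota add0n => /andP [_ hj].
  by rewrite !nth_cat hi (ltn_trans hj hi).
have -> : iota (0 + size A) (size B) = map (addn (size A)) (iota 0 (size B)).
  by rewrite add0n -{1}(addn0 (size A)) iotaDl.
rewrite count_map; apply: eq_in_count => i; rewrite mem_iota add0n => /andP [_ hi] /=.
rewrite nth_addcat iotaD all_cat.
have -> : all (fun j => nth 0 (A ++ B) j < nth 0 B i) (iota 0 (size A)).
  apply/allP => j; rewrite mem_iota add0n => /andP [_ hj].
  by rewrite nth_cat hj; apply: hab; apply: mem_nth.
have -> : iota (0 + size A) i = map (addn (size A)) (iota 0 i).
  by rewrite add0n -{1}(addn0 (size A)) iotaDl.
rewrite all_map /=; apply: eq_all => j /=.
by rewrite nth_addcat.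
Qed.

Lemma lrmax_shift k s : lrmax (shift k s) = lrmax s.
Proof.
rewrite /lrmax /shift size_map; apply: eq_in_count => i.
rewrite mem_iota => /andP [_ hi].
apply: eq_in_all => j; rewrite mem_iota => /andP [_ hj].
by rewrite !(nth_map 0) ?ltn_add2r //; apply: ltn_trans hj hi.
Qed.

Lemma lrmax1 m : lrmax [:: m] = 1.
Proof. by []. Qed.

Lemma mem_shift k s x : x \in shift k s -> exists2 y, y \in s & x = y + k.
Proof. by move/mapP. Qed.

Theorem proposition5 (k l : nat) (pi1 pi2 : seq nat) :
  two_stack_sortable k pi1 -> two_stack_sortable l pi2 ->
  two_stack_sortable (k + l + 1) (C1 k l pi1 pi2) /\
  slmax (C1 k l pi1 pi2) = slmax pi1 + slmax pi2 + 1.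
Proof.
move=> /andP [hp1 /eqP hs1] /andP [hp2 /eqP hs2].
have hA : forall x, x \in pi1 -> 0 < x <= k.
  by move=> x; rewrite (perm_mem hp1) mem_iota => /andP [h1 h2]; apply/andP; split; lia.
have hB : forall x, x \in pi2 -> 0 < x <= l.
  by move=> x; rewrite (perm_mem hp2) mem_iota => /andP [h1 h2]; apply/andP; split; lia.
have hA' : forall x, x \in S pi1 -> 0 < x <= k by move=> x; rewrite S_mem; apply: hA.
have hB' : forall x, x \in S pi2 -> 0 < x <= l by move=> x; rewrite S_mem; apply: hB.
have hSpi : S (C1 k l pi1 pi2) = S pi1 ++ shift k (S pi2) ++ [:: k + l + 1].
  rewrite /C1 S_split ?S_shift //.
    by apply/allP => x /hA /andP [h1 h2]; lia.
  by apply/allP => x /mem_shift [y /hB /andP [h1 h2] ->]; lia.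
have hsh : shift k (iota 1 l) = iota (1 + k) l.
  by rewrite /shift (eq_map (fun x => addnC x k)) -iotaDl addnC.
have hio : iota 1 (k + l + 1) = iota 1 k ++ iota (1 + k) l ++ [:: k + l + 1].
  by rewrite !iotaD -catA /= [1 + (k + l)]addnC.
split.
  apply/andP; split.
    rewrite /is_perm /C1 hio; apply: perm_cat => //.
    apply: (@perm_trans _ (shift k pi2 ++ [:: k + l + 1])).
      by rewrite -cat1s perm_catC.
    by rewrite perm_cat2r -hsh; apply: perm_map.
  rewrite hSpi catA S_split.
  - rewrite S_cat; last first.
      by move=> a b /hA' /andP [h1 h2] /mem_shift [y /hB' /andP [h3 h4] ->]; lia.
    by rewrite S_shift hs1 hs2 hsh hio -catA.
  - apply/allP => x; rewrite mem_cat => /orP [/hA' /andP [h1 h2] | /mem_shift [y /hB' /andP [h3 h4] ->]]; lia.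
  - by [].
rewrite /slmax hSpi lrmax_cat; last first.
  move=> a b /hA' /andP [h1 h2]; rewrite mem_cat => /orP [/mem_shift [y /hB' /andP [h3 h4] ->] |].
    lia.
  by rewrite inE => /eqP ->; lia.
rewrite lrmax_cat; last first.
  by move=> a b /mem_shift [y /hB' /andP [h3 h4] ->]; rewrite inE => /eqP ->; lia.
by rewrite lrmax_shift lrmax1 addnA.
Qed.
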